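(* Let $r\geq 3$. There exists a constant $C$ depending only on $r$ such that the following holds. Let $G$ be an $n$-vertex $K_r$-minor free bipartite graph with vertex partition $A$ and $B$, where $|A|=k$ and $|B|=n-k$. Then $e(G)\leq (r-2)n+Ck$.
   Context: $e(G)$ denotes the number of edges of $G$. A graph is $K_r$-minor free if $K_r$ cannot be obtained from it by vertex deletions, edge deletions and edge contractions. *)

(* Defs.v *)
From mathcomp Require Import all_boot.
Set Implicit Arguments. Unset Strict Implicit. Unset Printing Implicit Defensive.

Definition simple_graph (T : finType) (g : rel T) : Prop :=
  symmetric g /\ irreflexive g.

Definition edges (T : finType) (g : rel T) : {set {set T}} :=
  [set [set x; y] | x in T, y in T & g x y].
Definition nedges (T : finType) (g : rel T) : nat := #|edges g|.

Definition connected_in (T : finType) (g : rel T) (S : {set T}) : bool :=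
  [forall x in S, forall y in S,
     connect [rel u v | [&& g u v, u \in S & v \in S]] x y].

Definition has_Kr_minor (T : finType) (g : rel T) (r : nat) : Prop :=
  exists X : 'I_r -> {set T},
    [/\ forall i, X i != set0,
        forall i, connected_in g (X i),
        forall i j, i != j -> [disjoint X i & X j] &
        forall i j, i != j -> exists x y, [/\ x \in X i, y \in X j & g x y]].

Definition bipartite_with (T : finType) (g : rel T) (A : {set T}) : Prop :=
  forall x y, g x y -> (x \in A) != (y \in A).

(* Main.v *)
Require Import Defs.
From mathcomp Require Import all_boot.
From Stdlib Require Import Classical.
From mathcomp Require Import zify.
Set Implicit Arguments. Unset Strict Implicit. Unset Printing Implicit Defensive.

Section G.
Variable T : finType.

Lemma disjP (A B : {set T}) : (forall z, z \in A -> z \in B -> False) -> [disjoint A & B].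
Proof.
move=> H; rewrite -setI_eq0; apply/eqP/setP=> z; rewrite !inE.
by apply/negbTE/negP=> /andP [] /H H' /H'.
Qed.

Lemma disjE (A B : {set T}) z : [disjoint A & B] -> z \in A -> z \in B -> False.
Proof.
rewrite -setI_eq0 => /eqP /setP /(_ z); rewrite !inE => H zA zB.
by rewrite zA zB in H.
Qed.

Lemma connected_mono (g g' : rel T) (S : {set T}) :
  (forall x y, x \in S -> y \in S -> g x y -> g' x y) ->
  connected_in g S -> connected_in g' S.
Proof.
move=> sub /forallP H; apply/forallP=> x; apply/implyP=> xS.
apply/forallP=> y; apply/implyP=> yS.
have := implyP (forallP (implyP (H x) xS) y) yS.
apply: connect_sub => u v /= /and3P [guv uS vS].
by apply: connect1; rewrite /= sub ?uS ?vS.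
Qed.

Lemma star_connected (g : rel T) (S : {set T}) c :
  c \in S -> (forall z, z \in S -> z != c -> g z c && g c z) ->
  connected_in g S.
Proof.
move=> cS H; apply/forallP=> x; apply/implyP=> xS.
apply/forallP=> y; apply/implyP=> yS.
set R := [rel u v | _].
have hx : connect R x c.
  case: (eqVneq x c) => [->|xc]; first by rewrite connect0.
  by apply: connect1; rewrite /= xS cS; case/andP: (H x xS xc) => ->.
have hy : connect R c y.
  case: (eqVneq y c) => [->|yc]; first by rewrite connect0.
  by apply: connect1; rewrite /= yS cS; case/andP: (H y yS yc) => _ ->.
exact: connect_trans hx hy.
Qed.

Definition ismodel (g : rel T) (W : {set T}) r (X : 'I_r -> {set T}) :=
  [/\ forall i, X i != set0, forall i, connected_in g (X i),
      forall i j, i != j -> [disjoint X i & X j],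
      forall i j, i != j -> exists x y, [/\ x \in X i, y \in X j & g x y] &
      forall i, X i \subset W].

Definition model_in (g : rel T) (W : {set T}) r :=
  exists X : 'I_r -> {set T}, ismodel g W X.

Lemma model_has (g : rel T) W r : model_in g W r -> has_Kr_minor g r.
Proof. by case=> X [*]; exists X. Qed.

Lemma model_mono (g g' : rel T) (W W' : {set T}) r :
  (forall x y, g x y -> g' x y) -> W \subset W' -> model_in g W r -> model_in g' W' r.
Proof.
move=> sub sW [X [H1 H2 H3 H4 H5]]; exists X; split=> //.
- by move=> i; apply: connected_mono (H2 i) => x y _ _; apply: sub.
- by move=> i j ij; case: (H4 i j ij) => x [y [? ? ?]]; exists x, y; split=> //; apply: sub.
- by move=> i; apply: subset_trans (H5 i) sW.
Qed.

Definition ext r (X : 'I_r -> {set T}) (Z : {set T}) (i : 'I_r.+1) :=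
  match unlift ord_max i with Some j => X j | None => Z end.

Lemma extend_model (g : rel T) W r (X : 'I_r -> {set T}) Z :
  symmetric g -> ismodel g W X -> Z != set0 -> connected_in g Z ->
  (forall j, [disjoint X j & Z]) ->
  (forall j, exists x y, [/\ x \in X j, y \in Z & g x y]) ->
  Z \subset W -> ismodel g W (ext X Z).
Proof.
move=> sg [H1 H2 H3 H4 H5] Z0 Zc ZD ZA ZW; rewrite /ext; split.
- by move=> i; case: unliftP.
- by move=> i; case: unliftP.
- move=> i j; case: unliftP => [i' ->|->]; case: unliftP => [j' ->|->] //.
  + by move=> ij; apply: H3; apply: contraNneq ij => ->.
  + by move=> _; rewrite disjoint_sym.
  + by rewrite eqxx.
- move=> i j; case: unliftP => [i' ->|->]; case: unliftP => [j' ->|->] //.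
  + by move=> ij; apply: H4; apply: contraNneq ij => ->.
  + by move=> _; case: (ZA j') => x [y [? ? ?]]; exists y, x; split=> //; rewrite sg.
  + by rewrite eqxx.
- by move=> i; case: unliftP.
Qed.

Lemma lift_model (g h : rel T) (beta : T -> {set T}) (U W : {set T}) r :
  (forall v, v \in U -> beta v != set0) ->
  (forall v, connected_in g (beta v)) ->
  (forall u v, u != v -> [disjoint beta u & beta v]) ->
  (forall u v, h u v -> exists a b, [/\ a \in beta u, b \in beta v & g a b]) ->
  (forall v, v \in U -> beta v \subset W) ->
  model_in h U r -> model_in g W r.
Proof.
move=> bne bc bd bh bW [X [H1 H2 H3 H4 H5]].
exists (fun i => \bigcup_(v in X i) beta v); split.
- move=> i; case/set0Pn: (H1 i) => v vX.
  have vU : v \in U by apply: (subsetP (H5 i)).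
  case/set0Pn: (bne v vU) => a av; apply/set0Pn; exists a.
  by apply/bigcupP; exists v.
- move=> i; set Y := \bigcup_(v in X i) beta v.
  have bY : forall v, v \in X i -> beta v \subset Y.
    by move=> v vX; apply/subsetP=> z zb; apply/bigcupP; exists v.
  have inb : forall v a b, v \in X i -> a \in beta v -> b \in beta v ->
      connect [rel u v | [&& g u v, u \in Y & v \in Y]] a b.
    move=> v a b vX av bv.
    have := implyP (forallP (implyP (forallP (bc v) a) av) b) bv.
    apply: connect_sub => p q /= /and3P [gpq pb qb]; apply: connect1.
    by rewrite /= gpq (subsetP (bY v vX)) // (subsetP (bY v vX)).
  apply/forallP=> a; apply/implyP=> /bigcupP [u uX au].
  apply/forallP=> b; apply/implyP=> /bigcupP [w wX bw].
  have := implyP (forallP (implyP (forallP (H2 i) u) uX) w) wX.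
  case/connectP=> p pth wE; rewrite wE in bw; clear wE wX.
  elim: p u a uX au pth bw => [|v p IH] u a uX au /=.
    by move=> _ bu; apply: (inb u).
  case/andP=> /and3P [huv _ vX] pth bl.
  case: (bh u v huv) => a' [b' [a'u b'v gab]].
  apply: (connect_trans (inb u a a' uX au a'u)).
  apply: (connect_trans _ (IH v b' vX b'v pth bl)).
  apply: connect1; rewrite /= gab.
  by rewrite (subsetP (bY u uX)) // (subsetP (bY v vX)).
- move=> i j ij; rewrite -setI_eq0; apply/eqP/setP=> z; rewrite !inE.
  apply/negbTE/negP=> /andP [/bigcupP [u uX zu] /bigcupP [v vX zv]].
  have uv : u != v.
    apply: contraT; rewrite negbK => /eqP E; subst v.
    by have := H3 i j ij; rewrite -setI_eq0 => /eqP/setP/(_ u); rewrite !inE uX vX.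
  by have := bd u v uv; rewrite -setI_eq0 => /eqP/setP/(_ z); rewrite !inE zu zv.
- move=> i j ij; case: (H4 i j ij) => u [v [uX vX huv]].
  case: (bh u v huv) => a [b [au bv gab]]; exists a, b; split=> //.
    by apply/bigcupP; exists u.
  by apply/bigcupP; exists v.
- move=> i; apply/bigcupsP=> v vX; apply: bW; exact: (subsetP (H5 i)).
Qed.


Definition nb (h : rel T) x := [set y | h x y].
Definition E (h : rel T) := \sum_(x : T) #|nb h x|.

Definition contr (h : rel T) x y :=
  [rel u v | [&& u != y, v != y, u != v &
     (h u v || ((u == x) && h y v)) || ((v == x) && h u y)]].

Lemma contr_count (h : rel T) x y :
  symmetric h -> irreflexive h -> h x y ->
  E h <= E (contr h x y) + 2 + 2 * #|nb h x :&: nb h y|.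
Proof.
move=> sh ih hxy.
have xy : x != y by apply: contraTneq hxy => ->; rewrite ih.
set h' := contr h x y; set I := nb h x :&: nb h y.
pose P := fun i => (i != x) && (i != y).
set R := \sum_(i | P i) #|nb h i|; set R' := \sum_(i | P i) #|nb h' i|.
have e1 : E h = #|nb h x| + (#|nb h y| + R).
  rewrite /E (bigD1 x) // (bigD1 y) /=; last by rewrite eq_sym.
  by congr (_ + (_ + _)); apply: eq_bigl => i.
have e2 : E h' = #|nb h' x| + (#|nb h' y| + R').
  rewrite /E (bigD1 x) // (bigD1 y) /=; last by rewrite eq_sym.
  by congr (_ + (_ + _)); apply: eq_bigl => i.
rewrite e1 e2.
have HR : R <= R' + #|I|.
  rewrite /R /R'.
  apply: (@leq_trans (\sum_(i | P i) (#|nb h' i| + (i \in I)))).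
    apply: leq_sum => u /andP [ux uy].
    case: (boolP (h u y)) => huy; last first.
      rewrite (leq_trans _ (leq_addr _ _)) //; apply: subset_leq_card.
      apply/subsetP=> v; rewrite !inE /= => huv.
      rewrite uy huv /= andbT; apply/andP; split.
        by apply: contraNneq huy => <-.
      by apply: contraTneq huv => ->; rewrite ih.
    case: (boolP (h u x)) => hux.
      have -> : u \in I by rewrite !inE sh hux sh huy.
      rewrite (cardsD1 y (nb h u)) addnC leq_add ?leq_b1 //; apply: subset_leq_card.
      apply/subsetP=> v; rewrite !inE /= => /andP [vy huv].
      rewrite uy vy huv /= ?andbT; by apply: contraTneq huv => ->; rewrite ih.
    have -> : u \in I = false by rewrite !inE sh (negbTE hux).
    rewrite addn0 (cardsD1 y (nb h u)) inE /= huy add1n.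
    have: x |: (nb h u :\ y) \subset nb h' u.
      apply/subsetP=> v; rewrite !inE /= => /orP [/eqP ->|/andP [vy huv]].
        by rewrite ux uy xy /= eqxx huy !orbT.
      rewrite uy vy huv /= ?andbT; by apply: contraTneq huv => ->; rewrite ih.
    move/subset_leq_card; rewrite cardsU1 !inE negb_and negbK.
    by rewrite hux orbT.
  rewrite big_split /= leq_add2l.
  apply: (@leq_trans (\sum_(i : T) (i \in I))); first by rewrite [X in _ <= X](bigID P) /= leq_addr.
  rewrite -sum1_card; apply: eq_leq; symmetry; rewrite big_mkcond; apply: eq_bigr => i _; by case: (i \in I).
have Hx : #|nb h x| + #|nb h y| <= #|nb h' x| + 2 + #|I|.
  have: (nb h x :|: nb h y) :\ x :\ y \subset nb h' x.
    apply/subsetP=> v; rewrite !inE /= => /andP [vy /andP [vx /orP [hv|hv]]].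
      by rewrite xy vy eq_sym vx hv.
    by rewrite xy vy eq_sym vx eqxx hv !orbT.
  move/subset_leq_card => H.
  have c1 := cardsD1 x (nb h x :|: nb h y).
  have c2 := cardsD1 y ((nb h x :|: nb h y) :\ x).
  have b1 := leq_b1 (x \in nb h x :|: nb h y).
  have b2 := leq_b1 (y \in (nb h x :|: nb h y) :\ x).
  have c3 := cardsUI (nb h x) (nb h y).
  rewrite -/I in c3; lia.
lia.
Qed.


Definition supp (h : rel T) (V : {set T}) := forall u v, h u v -> (u \in V) && (v \in V).

Lemma contr_sym (h : rel T) x y : symmetric h -> symmetric (contr h x y).
Proof.
move=> sh u v /=; rewrite (eq_sym u v) (sh u v) (sh y v) (sh u y).
by case: (u != y); case: (v != y); case: (v != u) => //=; rewrite orbAC.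
Qed.

Lemma contr_irr (h : rel T) x y : irreflexive (contr h x y).
Proof. by move=> u; rewrite /= eqxx /= !andbF. Qed.

Lemma contr_supp (h : rel T) x y V : h x y -> supp h V -> supp (contr h x y) (V :\ y).
Proof.
move=> hxy sV u v /= /and4P [uy vy _ H]; rewrite !inE uy vy /=.
case/orP: H => [/orP [huv|/andP [/eqP ux hyv]]|/andP [/eqP vx huy]].
- exact: sV.
- by rewrite ux; case/andP: (sV _ _ hxy) => -> _; case/andP: (sV _ _ hyv).
- rewrite vx /=; case/andP: (sV _ _ hxy) => -> _; case/andP: (sV _ _ huy) => -> _; by rewrite andbT.
Qed.

Lemma contr_lift (h : rel T) x y V r :
  symmetric h -> irreflexive h -> h x y -> supp h V ->
  model_in (contr h x y) (V :\ y) r -> model_in h V r.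
Proof.
move=> sh ih hxy sV.
have xy : x != y by apply: contraTneq hxy => ->; rewrite ih.
have [xV yV] : (x \in V) /\ (y \in V) by case/andP: (sV _ _ hxy).
pose beta u := if u == x then [set x; y] else if u == y then set0 else [set u].
apply: (@lift_model h _ beta).
- move=> v; rewrite !inE /beta => /andP [vy _]; rewrite (negbTE vy).
  by case: ifP => _; apply/set0Pn; [exists x; rewrite !inE eqxx | exists v; rewrite inE].
- move=> v; rewrite /beta; case: ifP => _.
    apply: (@star_connected _ _ x); first by rewrite !inE eqxx.
    move=> z; rewrite !inE => /orP [->|/eqP ->] // _; by rewrite hxy sh hxy.
  case: ifP => _.
    by apply/forallP=> z; rewrite inE.
  apply: (@star_connected _ _ v); first by rewrite inE.
  by move=> z; rewrite inE => /eqP ->; rewrite eqxx.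
- move=> u v uv; apply: disjP => z; rewrite /beta.
  have [eu|nux] := eqVneq u x; have [ev|nvx] := eqVneq v x.
  + by subst; rewrite eqxx in uv.
  + have [evy|nvy] := eqVneq v y; rewrite !inE //.
    by move=> /orP [] /eqP -> /eqP vE; [rewrite -vE eqxx in nvx | rewrite -vE eqxx in nvy].
  + have [euy|nuy] := eqVneq u y; rewrite !inE //.
    by move=> /eqP -> /orP [] /eqP E; [rewrite E eqxx in nux | rewrite E eqxx in nuy].
  + have [euy|nuy] := eqVneq u y; have [evy|nvy] := eqVneq v y; rewrite !inE //.
    by move=> /eqP -> /eqP E; rewrite E eqxx in uv.
- move=> u v /= /and4P [uy vy _ H].
  have bu : forall w, w != y -> w \in beta w.
    by move=> w wy; rewrite /beta; case: ifP => [/eqP ->|_]; rewrite ?(negbTE wy) !inE eqxx.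
  case/orP: H => [/orP [huv|/andP [/eqP -> hyv]]|/andP [/eqP -> huy]].
  + by exists u, v; split=> //; apply: bu.
  + by exists y, v; split=> //; [rewrite /beta eqxx !inE eqxx orbT | apply: bu].
  + by exists u, y; split=> //; [apply: bu | rewrite /beta eqxx !inE eqxx orbT].
- move=> v; rewrite !inE => /andP [vy vV]; rewrite /beta (negbTE vy).
  case: ifP => _; apply/subsetP=> z; rewrite !inE; first by case/orP=> /eqP ->.
  by move/eqP ->.
Qed.


Lemma ismodel_mono (g g' : rel T) (W W' : {set T}) r (X : 'I_r -> {set T}) :
  (forall x y, g x y -> g' x y) -> W \subset W' -> ismodel g W X -> ismodel g' W' X.
Proof.
move=> sub sW [H1 H2 H3 H4 H5]; split=> //.
- by move=> i; apply: connected_mono (H2 i) => x y _ _; apply: sub.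
- by move=> i j ij; case: (H4 i j ij) => x [y [? ? ?]]; exists x, y; split=> //; apply: sub.
- by move=> i; apply: subset_trans (H5 i) sW.
Qed.

Lemma E_edge (h : rel T) : 0 < E h -> exists x y, h x y.
Proof.
move=> H; case: (pickP (fun x => 0 < #|nb h x|)) => [x /card_gt0P [y]|H0].
  by rewrite inE; exists x, y.
move: H; rewrite /E big1 // => x _; move: (H0 x) => /=; by case: #|_|.
Qed.

Lemma set1_connected (g : rel T) x : connected_in g [set x].
Proof.
apply: (@star_connected _ _ x); first by rewrite inE.
by move=> z; rewrite inE => /eqP ->; rewrite eqxx.
Qed.

Fixpoint cM r := if r is r'.+1 then (cM r').*2 + 2 else 0.

Lemma mader r : forall h V, symmetric h -> irreflexive h -> supp h V ->
  cM r * #|V| < E h -> model_in h V r.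
Proof.
elim: r => [|r IHr].
  move=> h V _ _ _ _; have i0 : 'I_0 -> False by case.
  by exists (fun i => set0); split=> i; case: (i0 i).
suff: forall n (h : rel T) (V : {set T}), #|V| <= n -> symmetric h -> irreflexive h -> supp h V ->
  cM r.+1 * #|V| < E h -> model_in h V r.+1 by move=> H h V; apply: H.
elim=> [|n IHn] h V Vn sh ih sV hE.
  have [x [y hxy]] := E_edge (leq_ltn_trans (leq0n _) hE).
  case/andP: (sV _ _ hxy) => xV _.
  by move: Vn; rewrite leqn0 => /eqP/cards0_eq V0; rewrite V0 inE in xV.
case: (classic (model_in h V r.+1)) => // nM; exfalso.
have [x [y0 hxy0]] := E_edge (leq_ltn_trans (leq0n _) hE).
have common : forall y, h x y -> cM r < #|nb h x :&: nb h y|.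
  move=> y hxy; rewrite ltnNge; apply/negP => Hle.
  have yV : y \in V by case/andP: (sV _ _ hxy).
  have cV := cardsD1 y V; rewrite yV /= in cV.
  have H : ~~ (cM r.+1 * #|V :\ y| < E (contr h x y)).
    apply/negP => H; apply: nM; apply: (contr_lift sh ih hxy sV).
    apply: IHn H => //.
    - by rewrite -ltnS (leq_trans _ Vn) // cV.
    - exact: contr_sym.
    - exact: contr_irr.
    - exact: contr_supp.
  have cc := contr_count sh ih hxy.
  have e1 : cM r.+1 = 2 * cM r + 2 by rewrite /= -muln2 mulnC.
  move: hE H; rewrite cV -ltnNge e1 !mulnDl !mulnDr.
  move: cc Hle; set k := #|nb h x :&: nb h y|; set m := #|V :\ y|; set c := cM r.
  lia.
pose N := nb h x.
pose hN := [rel u v | [&& h u v, u \in N & v \in N]].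
have shN : symmetric hN by move=> u v /=; rewrite sh; case: (h v u); case: (u \in N); case: (v \in N).
have ihN : irreflexive hN by move=> u /=; rewrite ih.
have sN : supp hN N by move=> u v /= /and3P [_ -> ->].
have N0 : 0 < #|N| by apply/card_gt0P; exists y0; rewrite inE.
have EN : cM r * #|N| < E hN.
  apply: (@leq_trans ((cM r).+1 * #|N|)); first by rewrite mulSn -addn1 addnC leq_add2r.
  apply: (@leq_trans (\sum_(u in N) #|nb hN u|)); last first.
    by rewrite /E [X in _ <= X](bigID (fun u => u \in N)) /= leq_addr.
  rewrite mulnC -sum_nat_const; apply: leq_sum => u uN.
  apply: (leq_trans (common u _)); last first.
    apply: subset_leq_card; apply/subsetP=> v; rewrite !inE /= => /andP [hxv huv].
    by rewrite huv uN /N inE.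
  by move: uN; rewrite /N inE.
case: (IHr hN N shN ihN sN EN) => X HX.
apply: nM; exists (ext X [set x]).
have xV : x \in V by case/andP: (sV _ _ hxy0).
have XN : forall j, X j \subset N by case: HX.
have HX' : ismodel h V X.
  apply: ismodel_mono HX; first by move=> u v /and3P [].
  by apply/subsetP=> z; rewrite /N inE => /sV /andP [].
apply: extend_model => //.
- by apply/set0Pn; exists x; rewrite inE.
- exact: set1_connected.
- move=> j; apply: disjP => z /(subsetP (XN j)); rewrite /N !inE => hxz /eqP zx.
  by rewrite zx ih in hxz.
- move=> j; case: HX => H1 _ _ _ _; case/set0Pn: (H1 j) => z zX.
  exists z, x; split; rewrite ?inE //.
  by move: (subsetP (XN j) z zX); rewrite /N inE sh.
- by rewrite sub1set.
Qed.


Lemma E_lt (h h' : rel T) a a' : (forall u v, h u v -> h' u v) -> h' a a' -> ~~ h a a' ->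
  E h < E h'.
Proof.
move=> sub h'a ha; rewrite /E (bigD1 a) // [X in _ < X](bigD1 a) //=.
rewrite -addSn leq_add //.
  apply: proper_card; apply/properP; split.
    by apply/subsetP=> v; rewrite !inE; apply: sub.
  by exists a'; rewrite !inE.
by apply: leq_sum => u _; apply: subset_leq_card; apply/subsetP=> v; rewrite !inE; apply: sub.
Qed.

Section Bip.
Variables (g : rel T) (A : {set T}).
Hypothesis sg : symmetric g.
Hypothesis ig : irreflexive g.
Hypothesis bip : bipartite_with g A.

Definition betaf (f : T -> option T) a :=
  if a \in A then a |: [set b | f b == Some a] else set0.

Definition hf (f : T -> option T) :=
  [rel u v | [&& u \in A, v \in A, u != v &
     [exists a in betaf f u, exists b in betaf f v, g a b]]].

Definition valid (f : T -> option T) (S : {set T}) :=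
  forall b a, f b = Some a -> [/\ b \in S, a \in A & g b a].

Lemma other_side x y : g x y -> x \notin A -> y \in A.
Proof. by move/bip; case: (x \in A); case: (y \in A). Qed.

Lemma betaf_conn f S a : valid f S -> connected_in g (betaf f a).
Proof.
move=> vf; rewrite /betaf; case: ifP => aA; last by apply/forallP=> z; rewrite inE.
apply: (@star_connected _ _ a); first by rewrite !inE eqxx.
move=> z; rewrite !inE => /orP [->//|/eqP /vf [_ _ gza]] _.
by rewrite gza sg gza.
Qed.

Lemma betaf_disj f S u v : valid f S -> (forall b, b \in S -> b \notin A) ->
  u != v -> [disjoint betaf f u & betaf f v].
Proof.
move=> vf SA uv; apply: disjP => z; rewrite /betaf.
case: ifP => uA; rewrite ?inE //; case: ifP => vA; rewrite ?inE //.
case/orP=> [/eqP zu|/eqP fzu]; case/orP=> [/eqP zv|/eqP fzv].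
- by subst; rewrite eqxx in uv.
- by subst; case: (vf _ _ fzv) => /SA; rewrite uA.
- by subst; case: (vf _ _ fzu) => /SA; rewrite vA.
- by move: fzu; rewrite fzv => [[]] E; rewrite E eqxx in uv.
Qed.

Lemma hf_sym f : symmetric (hf f).
Proof.
move=> u v /=; rewrite eq_sym; case: (u \in A); case: (v \in A); case: (v != u) => //=.
apply/idP/idP => /existsP [a /andP [au /existsP [b /andP [bv gab]]]];
  apply/existsP; exists b; rewrite bv /=; apply/existsP; exists a; by rewrite au sg.
Qed.

Lemma hf_irr f : irreflexive (hf f).
Proof. by move=> u /=; rewrite eqxx /= !andbF. Qed.

Lemma hf_supp f : supp (hf f) A.
Proof. by move=> u v /= /and4P [-> -> _ _]. Qed.

Lemma hf_lift f S r : valid f S -> (forall b, b \in S -> b \notin A) ->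
  model_in (hf f) A r -> has_Kr_minor g r.
Proof.
move=> vf SA M; apply: (@model_has _ setT).
apply: (@lift_model g (hf f) (betaf f) A) M.
- by move=> v vA; apply/set0Pn; exists v; rewrite /betaf vA !inE eqxx.
- by move=> v; apply: betaf_conn vf.
- by move=> u v; apply: betaf_disj vf SA.
- move=> u v /= /and4P [_ _ _ /existsP [a /andP [au /existsP [b /andP [bv gab]]]]].
  by exists a, b.
- by move=> v _; apply: subsetT.
Qed.

Variable r' : nat.
Hypothesis noK : ~ has_Kr_minor g r'.+1.

Definition B1 := [set b | (b \notin A) && (r' <= #|nb g b|)].

Lemma greedy n (S : {set T}) : #|S| = n -> S \subset B1 -> exists f, valid f S /\ #|S| <= E (hf f).
Proof.
elim: n S => [|n IH] S Sn SB.
  exists (fun _ => None); split; last by rewrite Sn.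
  by move=> b a.
have [b bS] : exists b, b \in S by apply/card_gt0P; rewrite Sn.
have cS := cardsD1 b S; rewrite bS Sn add1n in cS; case: cS => cS.
have [f [vf Ef]] := IH (S :\ b) (esym cS) (subset_trans (subsetDl _ _) SB).
have SA : forall z, z \in S -> z \notin A.
  by move=> z /(subsetP SB); rewrite inE => /andP [].
have fb : f b = None.
  case E1: (f b) => [a|] //; case: (vf _ _ E1); by rewrite !inE eqxx.
have bA := SA b bS.
have bdeg : r' <= #|nb g b| by move: (subsetP SB b bS); rewrite inE => /andP [].
case: (classic (exists a a', [/\ g b a, g b a', a != a' & ~~ hf f a a'])); last first.
  move=> nE; exfalso; apply: noK.
  have Hall : forall a a', g b a -> g b a' -> a != a' -> hf f a a'.
    move=> a a' ga ga' aa'; case: (boolP (hf f a a')) => // H; exfalso.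
    by apply: nE; exists a, a'.
  pose io (i : 'I_r') : T := enum_val (widen_ord bdeg i).
  have ioN : forall i, g b (io i).
    by move=> i; have := enum_valP (widen_ord bdeg i); rewrite inE.
  have ioA : forall i, io i \in A by move=> i; apply: other_side (ioN i) bA.
  have ioinj : injective io.
    move=> i j /enum_val_inj /(congr1 val) /= E2; exact: val_inj.
  have SA' : forall z, z \in S :\ b -> z \notin A by move=> z /setD1P [_ /SA].
  pose X i := betaf f (io i).
  have HX : ismodel g setT X.
    split.
    - by move=> i; apply/set0Pn; exists (io i); rewrite /X /betaf ioA !inE eqxx.
    - by move=> i; apply: betaf_conn vf.
    - move=> i j ij; apply: betaf_disj vf SA' _.
      by apply: contra ij => /eqP /ioinj ->.
    - move=> i j ij; have := Hall _ _ (ioN i) (ioN j) (contra (fun e => introT eqP (ioinj _ _ (eqP e))) ij).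
      by move=> /= /and4P [_ _ _ /existsP [a /andP [au /existsP [c /andP [cv gac]]]]]; exists a, c.
    - by move=> i; apply: subsetT.
  apply: (@model_has _ setT); exists (ext X [set b]).
  apply: extend_model => //.
  - by apply/set0Pn; exists b; rewrite inE.
  - exact: set1_connected.
  - move=> j; apply: disjP => z; rewrite /X /betaf ioA !inE => /orP [/eqP ->|/eqP fz] /eqP zb.
      by move: (ioA j); rewrite zb (negbTE bA).
    by move: fz; rewrite zb fb.
  - move=> j; exists (io j), b; split; [|by rewrite inE|by rewrite sg ioN].
    by rewrite /X /betaf ioA !inE eqxx.
move=> [a [a' [ga ga' aa' nh]]].
pose f' z := if z == b then Some a else f z.
have aA := other_side ga bA; have a'A := other_side ga' bA.
exists f'; split.
  move=> z c; rewrite /f'; case: (eqVneq z b) => [-> [<-]|zb fz].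
    by split.
  by case: (vf _ _ fz) => /setD1P [_ zS] cA gzc.
rewrite Sn cS; apply: (leq_ltn_trans Ef); apply: (E_lt (a := a) (a' := a')) => //.
- move=> u v /= /and4P [uA vA uv /existsP [x /andP [xu /existsP [y /andP [yv gxy]]]]].
  rewrite uA vA uv /=; apply/existsP; exists x; apply/andP; split.
    move: xu; rewrite /betaf uA !inE /f' => /orP [->//|/eqP fx].
    by case: (eqVneq x b) => [xb|_]; [move: fx; rewrite xb fb | rewrite fx eqxx orbT].
  apply/existsP; exists y; rewrite gxy andbT.
  move: yv; rewrite /betaf vA !inE /f' => /orP [->//|/eqP fy].
  by case: (eqVneq y b) => [yb|_]; [move: fy; rewrite yb fb | rewrite fy eqxx orbT].
- rewrite /= aA a'A aa' /=; apply/existsP; exists b; apply/andP; split.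
    by rewrite /betaf aA !inE /f' eqxx eqxx orbT.
  by apply/existsP; exists a'; rewrite /betaf a'A !inE eqxx /=.
Qed.

End Bip.


Lemma cardE_sum (S : {set T}) : #|S| = \sum_(u : T) (u \in S).
Proof.
rewrite -sum1_card big_mkcond /=; apply: eq_bigr => i _; by case: (i \in S).
Qed.

End G.

Lemma cardE_sum2 (U : finType) (S : {set U}) : #|S| = \sum_(u : U) (u \in S).
Proof. exact: cardE_sum. Qed.

Lemma edges_bound (T : finType) (g : rel T) (A : {set T}) :
  symmetric g -> bipartite_with g A ->
  nedges g <= \sum_(x : T) #|[set y | (x \notin A) && g x y]|.
Proof.
move=> sg bip.
pose P := [set p : T * T | (p.1 \notin A) && g p.1 p.2].
have sub : edges g \subset [set [set p.1; p.2] | p in P].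
  apply/subsetP => e /imset2P [x y _]; rewrite inE => gxy ->.
  case: (boolP (x \in A)) => xA.
    have yA : y \notin A by move: (bip _ _ gxy); rewrite xA; case: (y \in A).
    apply/imsetP; exists (y, x); last by rewrite /= setUC.
    by rewrite inE /= yA /= sg.
  by apply/imsetP; exists (x, y); rewrite ?inE ?xA.
apply: (leq_trans (subset_leq_card sub)); apply: (leq_trans (leq_imset_card _ _)).
rewrite cardE_sum2.
have -> : \sum_(p : T * T) (p \in P) = \sum_(x : T) \sum_(y : T) ((x, y) \in P).
  by rewrite pair_big /=; apply: eq_bigr => [[x y]] _.
apply: eq_leq; apply: eq_bigr => x _; rewrite cardE_sum2; apply: eq_bigr => y _; by rewrite !inE.
Qed.

Lemma main_T (T : finType) (g : rel T) (A : {set T}) r' :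
  simple_graph g -> ~ has_Kr_minor g r'.+1 -> bipartite_with g A ->
  nedges g <= (r'.+1 - 2) * #|T| + (cM r'.+1 + cM r'.+1 * cM r'.+1) * #|A|.
Proof.
case=> sg ig noK bip.
set D := cM r'.+1.
set B := B1 g A r'.
have BA : forall b, b \in B -> b \notin A by move=> b; rewrite inE => /andP [].
have [f [vf Ef]] := greedy sg bip noK (erefl #|B|) (subxx B).
have EhA : E (hf g A f) <= D * #|A|.
  rewrite leqNgt; apply/negP => H; apply: noK.
  apply: (hf_lift sg vf BA); apply: mader H.
  - exact: hf_sym.
  - exact: hf_irr.
  - exact: hf_supp.
set V := A :|: B.
pose hV := [rel u v | [&& g u v, u \in V & v \in V]].
have EhV : E hV <= D * #|V|.
  rewrite leqNgt; apply/negP => H; apply: noK.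
  apply: (@model_has _ _ setT); apply: (@model_mono _ hV g V setT) => //.
    by move=> x y /and3P [].
  apply: mader H.
  - by move=> u v /=; rewrite sg; case: (g v u); case: (u \in V); case: (v \in V).
  - by move=> u /=; rewrite ig.
  - by move=> u v /= /and3P [_ -> ->].
have cV := cardsUI A B.
have pt : forall x, #|[set y | (x \notin A) && g x y]| <= (r' - 1) + #|nb hV x|.
  move=> x; case: (boolP (x \in A)) => xA.
    by rewrite (_ : [set y | _] = set0) ?cards0 //; apply/setP=> y; rewrite !inE.
  case: (leqP r' #|nb g x|) => hd.
    have xB : x \in B by rewrite inE xA hd.
    rewrite (leq_trans _ (leq_addl _ _)) //; apply: subset_leq_card.
    apply/subsetP=> y; rewrite inE => /andP [_ gxy]; rewrite inE /= gxy /V !in_setU.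
    by rewrite xB orbT (other_side bip gxy xA).
  rewrite (leq_trans _ (leq_addr _ _)) //.
  apply: (@leq_trans #|nb g x|).
    by apply: subset_leq_card; apply/subsetP=> y; rewrite !inE => /andP [].
  by rewrite -ltnS; apply: (leq_trans hd); lia.
have Hsum : nedges g <= #|T| * (r' - 1) + E hV.
  apply: (leq_trans (edges_bound sg bip)).
  apply: (@leq_trans (\sum_(x : T) ((r' - 1) + #|nb hV x|))).
    by apply: leq_sum => x _; apply: pt.
  by rewrite big_split /= sum_nat_const.
have HB : #|B| <= D * #|A| by apply: leq_trans Ef EhA.
have H2 : D * #|V| <= D * #|A| + D * (D * #|A|).
  rewrite -mulnDr leq_mul2l; apply/orP; right; rewrite /V; lia.
have -> : r'.+1 - 2 = r' - 1 by lia.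
rewrite mulnDl -mulnA.
lia.
Qed.

Theorem lemma2p5 :
  forall r : nat, 3 <= r ->
  exists C : nat,
    forall (T : finType) (g : rel T) (A : {set T}),
      simple_graph g ->
      ~ has_Kr_minor g r ->
      bipartite_with g A ->
      nedges g <= (r - 2) * #|T| + C * #|A|.
Proof.
case=> [//|r'] _; exists (cM r'.+1 + cM r'.+1 * cM r'.+1) => T g A sg noK bip.
exact: main_T.
Qed.
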